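(* For every command $C$, every $c \in \{\mathit{true},\mathit{false}\}$ and every $\omega$-chain $f_0 \le f_1 \le f_2 \le \cdots$ of expectations (ordered pointwise), \[ \mathsf{et}_c[C]\bigl(\sup_{n\in\mathbb{N}} f_n\bigr) = \sup_{n\in\mathbb{N}} \mathsf{et}_c[C](f_n), \] where suprema of expectations are taken pointwise.
   Context: Let $\mathrm{Var}$ be a finite set of integer-valued variables and $\Sigma = \mathrm{Var}\to\mathbb{Z}$ the set of stores. Boolean expressions $\varphi$ over $\mathrm{Var}$ are evaluated on stores; $\sigma\models\varphi$ means $\varphi$ holds in $\sigma$. A distribution expression $d$ assigns to each store $\sigma$ a probability distribution $d(\sigma)$ on $\mathbb{Z}$ (countable support, total mass $1$). Commands are given by the grammar $C,D ::= \mathtt{skip} \mid \mathtt{tick}(r) \mid \mathtt{halt} \mid x :\approx d \mid \mathtt{if}_{[\psi]}(\varphi)\{C\}\{D\} \mid \mathtt{while}_{[\psi]}(\varphi)\{C\} \mid C \,\square\, D \mid C \oplus_p D \mid C;D$, with $r$ a nonnegative rational, $x\in\mathrm{Var}$, $\varphi,\psi$ Boolean expressions ($\psi$ is an assertion), and $p\in[0,1]$. An expectation is a function $f:\Sigma\to[0,\infty]$; $\mathrm{Expect}$ is the set of expectations, ordered pointwise ($f\le g$ iff $f(\sigma)\le g(\sigma)$ for all $\sigma$). Operations are lifted pointwise, $\mathbf{r}$ denotes the constant function $r$, $[\varphi](\sigma)=1$ if $\sigma\models\varphi$ and $0$ otherwise, and for a Boolean $c$, $[c]=1$ if $c=\mathit{true}$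 and $0$ otherwise; the convention $0\cdot\infty=0$ is used. For $c\in\{\mathit{true},\mathit{false}\}$ the transformer $\mathsf{et}_c[\cdot]:\mathrm{Cmd}\to\mathrm{Expect}\to\mathrm{Expect}$ is defined by: $\mathsf{et}_c[\mathtt{skip}](f)=f$; $\mathsf{et}_c[\mathtt{tick}(r)](f)=[c]\cdot\mathbf{r}+f$; $\mathsf{et}_c[\mathtt{halt}](f)=\mathbf{0}$; $\mathsf{et}_c[x:\approx d](f)=\lambda\sigma.\sum_{i\in\mathbb{Z}} d(\sigma)(i)\cdot f(\sigma[x\mapsto i])$; $\mathsf{et}_c[\mathtt{if}_{[\psi]}(\varphi)\{C\}\{D\}](f)=[\psi\wedge\varphi]\cdot\mathsf{et}_c[C](f)+[\psi\wedge\neg\varphi]\cdot\mathsf{et}_c[D](f)$; $\mathsf{et}_c[\mathtt{while}_{[\psi]}(\varphi)\{C\}](f)=\mathrm{lfp}\,F.\ [\psi\wedge\varphi]\cdot\mathsf{et}_c[C](F)+[\psi\wedge\neg\varphi]\cdot f$ (least fixed point w.r.t. the pointwise order); $\mathsf{et}_c[C\,\square\,D](f)=\max(\mathsf{et}_c[C](f),\mathsf{et}_c[D](f))$; $\mathsf{et}_c[C\oplus_p D](f)=\mathbf{p}\cdot\mathsf{et}_c[C](f)+\mathbf{(1-p)}\cdot\mathsf{et}_c[D](f)$; $\mathsf{et}_c[C;D](f)=\mathsf{et}_c[C](\mathsf{et}_c[D](f))$. *)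

(* Defs.v *)
From HB Require Import structures.
From mathcomp Require Import all_boot all_order all_algebra.
From mathcomp Require Import all_classical all_reals.
From mathcomp Require Import ereal esum.
Set Implicit Arguments. Unset Strict Implicit. Unset Printing Implicit Defensive.
Import Order.TTheory GRing.Theory Num.Theory.
Local Open Scope ring_scope.
Local Open Scope classical_set_scope.

Section Defs.
Variables (R : realType) (Var : finType).

Definition store := Var -> int.
Definition upd (s : store) (x : Var) (i : int) : store :=
  fun y => if y == x then i else s y.

Definition bexp := store -> bool.

(* probability distributions on Z (countable support is automatic on Z) *)
Record distr := Distr {
  dmass :> int -> R;
  dmass_ge0 : forall i, 0 <= dmass i;
  dmass_sum1 : (\esum_(i in setT) (dmass i)%:E = 1)%E }.

Definition dexp := store -> distr.

Inductive cmd :=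
| Skip
| Tick (r : rat) (hr : 0 <= r)
| Halt
| Assign (x : Var) (d : dexp)
| Ite (psi phi : bexp) (C D : cmd)
| While (psi phi : bexp) (C : cmd)
| NDet (C D : cmd)
| PChoice (C : cmd) (p : R) (hp : 0 <= p <= 1) (D : cmd)
| Seq (C D : cmd).

(* expectations: functions store -> [0, +oo] (nonnegativity imposed where needed) *)
Definition expect := store -> \bar R.

Definition iverson (b : bool) : \bar R := (if b then 1 else 0)%E.

(* least fixed point w.r.t. the pointwise order on [0,oo]-valued expectations,
   via Knaster-Tarski: pointwise infimum of all nonnegative pre-fixed points *)
Definition lfp (Phi : expect -> expect) : expect :=
  fun s => ereal_inf [set g s | g in
    [set g : expect | (forall t, (0 <= g t)%E) /\ (forall t, (Phi g t <= g t)%E)]].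

Fixpoint et (c : bool) (C : cmd) (f : expect) {struct C} : expect :=
  match C with
  | Skip => f
  | Tick r _ => fun s => (iverson c * (ratr r)%:E + f s)%E
  | Halt => fun _ => 0%E
  | Assign x d => fun s => (\esum_(i in setT) ((d s i)%:E * f (upd s x i)))%E
  | Ite psi phi C1 D1 => fun s =>
      (iverson (psi s && phi s) * et c C1 f s
       + iverson (psi s && ~~ phi s) * et c D1 f s)%E
  | While psi phi C1 =>
      lfp (fun F s => (iverson (psi s && phi s) * et c C1 F s
                      + iverson (psi s && ~~ phi s) * f s)%E)
  | NDet C1 D1 => fun s => maxe (et c C1 f s) (et c D1 f s)
  | PChoice C1 p _ D1 => fun s =>
      (p%:E * et c C1 f s + (1 - p)%:E * et c D1 f s)%E
  | Seq C1 D1 => fun s => et c C1 (et c D1 f) s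
  end.

Definition esup (f : nat -> expect) : expect :=
  fun s => ereal_sup [set f n s | n in [set: nat]].

End Defs.

(* Main.v *)
Require Import Defs.
From HB Require Import structures.
From mathcomp Require Import all_boot all_order all_algebra.
From mathcomp Require Import all_classical all_reals.
From mathcomp Require Import ereal esum.
From mathcomp Require Import all_analysis.
Import Order.TTheory GRing.Theory Num.Theory.
Local Open Scope ring_scope.
Local Open Scope classical_set_scope.
Set Implicit Arguments. Unset Strict Implicit.

Section Sups.
Variable R : realType.
Local Open Scope ereal_scope.
Definition sup (u : nat -> \bar R) := ereal_sup (range u).
Definition ndc (u : nat -> \bar R) := forall n, u n <= u n.+1.

Lemma sup_ub u n : u n <= sup u.
Proof. by apply: ereal_sup_ubound; exists n. Qed.

Lemma sup_le u M : (forall n, u n <= M) -> sup u <= M.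
Proof. by move=> h; apply: ge_ereal_sup => _ [n _ <-]. Qed.

Lemma sup_ge0 u : (forall n, 0 <= u n) -> 0 <= sup u.
Proof. by move=> h; apply: le_trans (h 0%N) (sup_ub _ _). Qed.

Lemma supC x : sup (fun _ => x) = x.
Proof. by apply/le_anti/andP; split; [apply: sup_le | exact: (sup_ub (fun _ => x) 0)]. Qed.

Lemma supD u v : ndc u -> ndc v -> (forall n, 0 <= u n) -> (forall n, 0 <= v n) ->
  sup (fun n => u n + v n) = sup u + sup v.
Proof.
move=> hu hv u0 v0.
have cu := ereal_nondecreasing_cvgn (proj1 (nondecreasing_seqP u) hu).
have cv := ereal_nondecreasing_cvgn (proj1 (nondecreasing_seqP v) hv).
have cuv : (fun n => u n + v n) @ \oo --> sup u + sup v.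
  by apply: cvgeD cu cv; apply: ge0_adde_def; rewrite inE; exact: sup_ge0.
have huv : ndc (fun n => u n + v n) by move=> n; apply: leeD.
have c2 := ereal_nondecreasing_cvgn (proj1 (nondecreasing_seqP _) huv).
exact: (cvg_unique _ c2 cuv).
Qed.

Lemma supZ u r : (0 <= r)%R -> sup (fun n => r%:E * u n) = r%:E * sup u.
Proof.
move=> r0; rewrite /sup -ereal_supZl //; last first.
  by apply/set0P; exists (u 0%N); exists 0%N.
congr ereal_sup; apply/seteqP; split => x /=.
  by move=> [n _ <-]; exists (u n) => //; exists n.
by move=> [_ [n _ <-] <-]; exists n.
Qed.

Lemma supI u b : sup (fun n => iverson R b * u n) = iverson R b * sup u.
Proof. by case: b; rewrite /iverson; apply: supZ. Qed.

Lemma supmax u v : sup (fun n => maxe (u n) (v n)) = maxe (sup u) (sup v).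
Proof.
apply/le_anti/andP; split.
  apply: sup_le => n; rewrite ge_max !le_max !sup_ub //= orbT //.
rewrite ge_max; apply/andP; split; apply: sup_le => n;
  apply: le_trans (sup_ub _ n); rewrite le_max lexx ?orbT //.
Qed.

Lemma sup_swap_le (u : nat -> nat -> \bar R) :
  sup (fun k => sup (fun n => u k n)) <= sup (fun n => sup (fun k => u k n)).
Proof.
apply: sup_le => k; apply: sup_le => n.
apply: le_trans (sup_ub _ n); exact: (sup_ub (fun k => u k n)).
Qed.

Lemma sup_swap (u : nat -> nat -> \bar R) :
  sup (fun k => sup (fun n => u k n)) = sup (fun n => sup (fun k => u k n)).
Proof. by apply/le_anti; rewrite !sup_swap_le. Qed.

Lemma sup_shift u : ndc u -> sup (fun n => u n.+1) = sup u.
Proof.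
move=> h; apply/le_anti/andP; split; apply: sup_le => n.
  exact: sup_ub.
apply: le_trans (h n) _; exact: (sup_ub (fun n => u n.+1)).
Qed.

Lemma sup_sum (T : Type) (s : seq T) (a : nat -> T -> \bar R) :
  (forall n i, 0 <= a n i) -> (forall i, ndc (a ^~ i)) ->
  sup (fun n => \sum_(i <- s) a n i) = \sum_(i <- s) sup (fun n => a n i).
Proof.
move=> a0 nd; elim: s => [|x s IH]; first by rewrite big_nil; under eq_fun do rewrite big_nil; exact: supC.
rewrite big_cons -IH; under eq_fun do rewrite big_cons.
apply: supD => //.
- by move=> n; apply: lee_sum => i _; apply: nd.
- by move=> n; apply: sume_ge0.
Qed.

Lemma esum_sup (T : choiceType) (a : nat -> T -> \bar R) :
  (forall n i, 0 <= a n i) -> (forall i, ndc (a ^~ i)) ->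
  \esum_(i in setT) sup (fun n => a n i) = sup (fun n => \esum_(i in setT) a n i).
Proof.
move=> a0 nd; apply/le_anti/andP; split; last first.
  by apply: sup_le => n; apply: le_esum => i _; apply: (sup_ub (fun n => a n i)).
apply: ge_ereal_sup => _ [X [finX _] <-].
rewrite fsbig_finite // -sup_sum //; apply: sup_le => n.
apply: le_trans (sup_ub _ n); apply: esum_ge; exists X => //.
by rewrite fsbig_finite.
Qed.
End Sups.

Section Et.
Variables (R : realType) (Var : finType) (c : bool).
Local Open Scope ereal_scope.
Local Notation expect := (expect R Var).
Definition nonneg (F : expect) := forall s, 0 <= F s.
Definition leF (F G : expect) := forall s, F s <= G s.

Lemma esupE (f : nat -> expect) s : esup f s = sup (fun n => f n s).
Proof. by []. Qed.

Lemma iverson_ge0 b : 0 <= iverson R b.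
Proof. by case: b; rewrite /iverson. Qed.

Lemma lfp_ge0 (Phi : expect -> expect) : nonneg (lfp Phi).
Proof. by move=> s; apply: le_ereal_inf_tmp => _ [g [g0 _] <-]. Qed.

Lemma et_ge0 (C : cmd R Var) f : nonneg f -> nonneg (et c C f).
Proof.
elim: C f => /=.
- by [].
- move=> r hr f f0 s; apply: adde_ge0 => //; apply: mule_ge0; first exact: iverson_ge0.
  by rewrite lee_fin ler0q.
- by move=> f _ s.
- move=> x d f f0 s; apply: esum_ge0 => i _; apply: mule_ge0 => //.
  by rewrite lee_fin dmass_ge0.
- move=> psi phi C1 IH1 D1 IH2 f f0 s; apply: adde_ge0; apply: mule_ge0;
    rewrite ?iverson_ge0 //; [exact: IH1 | exact: IH2].
- by move=> psi phi C1 IH f f0; apply: lfp_ge0.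
- move=> C1 IH1 D1 IH2 f f0 s; rewrite le_max IH1 //.
- move=> C1 IH1 p hp D1 IH2 f f0 s; case/andP: hp => p0 p1.
  apply: adde_ge0; apply: mule_ge0; rewrite ?lee_fin ?subr_ge0 //; [exact: IH1 | exact: IH2].
- move=> C1 IH1 D1 IH2 f f0 s; apply: IH1; exact: IH2.
Qed.

Lemma et_mono (C : cmd R Var) f g : nonneg f -> leF f g -> leF (et c C f) (et c C g).
Proof.
elim: C f g => /=.
- by [].
- by move=> r hr f g f0 fg s; apply: leeD2l.
- by move=> f g _ _ s.
- move=> x d f g f0 fg s; apply: le_esum => i _; apply: lee_wpmul2l => //.
  by rewrite lee_fin dmass_ge0.
- move=> psi phi C1 IH1 D1 IH2 f g f0 fg s; apply: leeD; apply: lee_wpmul2l;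
    rewrite ?iverson_ge0 //; [exact: IH1 | exact: IH2].
- move=> psi phi C1 IH f g f0 fg s; apply: le_ereal_inf_tmp => _ [h [h0 hpre] <-].
  apply: ereal_inf_lbound; exists h => //; split => // t.
  apply: le_trans (hpre t); apply: leeD2l; apply: lee_wpmul2l => //; exact: iverson_ge0.
- move=> C1 IH1 D1 IH2 f g f0 fg s; rewrite ge_max !le_max.
  by rewrite IH1 // IH2 // orbT.
- move=> C1 IH1 p hp D1 IH2 f g f0 fg s; case/andP: hp => p0 p1.
  apply: leeD; apply: lee_wpmul2l; rewrite ?lee_fin ?subr_ge0 //; [exact: IH1 | exact: IH2].
- move=> C1 IH1 D1 IH2 f g f0 fg s; apply: IH1; first exact: et_ge0.
  exact: IH2.
Qed.
End Et.

Section Lfp.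
Variables (R : realType) (Var : finType).
Local Open Scope ereal_scope.
Local Notation expect := (expect R Var).

Definition It (Phi : expect -> expect) k : expect := iter k Phi (fun _ => 0).

Lemma lfp_iter (Phi : expect -> expect) :
  (forall F, nonneg F -> nonneg (Phi F)) ->
  (forall F G, nonneg F -> leF F G -> leF (Phi F) (Phi G)) ->
  (forall F : nat -> expect, (forall n, nonneg (F n)) -> (forall n, leF (F n) (F n.+1)) ->
     Phi (esup F) = esup (fun n => Phi (F n))) ->
  lfp Phi = esup (It Phi).
Proof.
move=> P0 Pm Pc.
have I0 : forall k, nonneg (It Phi k).
  by elim => [|k IH] s //=; apply: P0.
have Ind : forall k, leF (It Phi k) (It Phi k.+1).
  elim => [|k IH] s /=; first exact: (P0 (fun _ => 0) (fun _ => lexx 0) s).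
  exact: (Pm _ _ (I0 k) IH s).
apply/funext => s; apply/le_anti/andP; split.
- apply: ereal_inf_lbound; exists (esup (It Phi)) => //; split.
  + move=> t; rewrite esupE; apply: sup_ge0 => n; exact: I0.
  + move=> t; rewrite Pc // !esupE.
    rewrite (_ : (fun n => Phi (It Phi n) t) = fun n => It Phi n.+1 t) //.
    by rewrite (sup_shift (u := fun n => It Phi n t)) // => n; apply: Ind.
- apply: le_ereal_inf_tmp => _ [g [g0 gpre] <-]; rewrite esupE; apply: sup_le => k.
  suff : leF (It Phi k) g by apply.
  elim: k => [|k IH] t /=; first exact: g0.
  apply: le_trans (gpre t); exact: (Pm _ _ (I0 k) IH t).
Qed.

Section While.
Variables (Ce : expect -> expect) (b1 b2 : store Var -> bool).
Hypothesis Ce0 : forall F, nonneg F -> nonneg (Ce F).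
Hypothesis Cem : forall F G, nonneg F -> leF F G -> leF (Ce F) (Ce G).
Hypothesis Cec : forall F : nat -> expect, (forall n, nonneg (F n)) ->
  (forall n, leF (F n) (F n.+1)) -> Ce (esup F) = esup (fun n => Ce (F n)).

Definition Phw (g : expect) (F : expect) : expect :=
  fun s => iverson R (b1 s) * Ce F s + iverson R (b2 s) * g s.

Lemma Phw_ge0 g F : nonneg g -> nonneg F -> nonneg (Phw g F).
Proof.
move=> g0 F0 s; apply: adde_ge0; apply: mule_ge0; rewrite ?iverson_ge0 //.
exact: Ce0.
Qed.

Lemma Phw_mono g g' F F' : nonneg g -> nonneg F -> leF g g' -> leF F F' ->
  leF (Phw g F) (Phw g' F').
Proof.
move=> g0 F0 gg FF s; apply: leeD; apply: lee_wpmul2l; rewrite ?iverson_ge0 //.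
exact: Cem.
Qed.

Lemma Phw_cont (g F : nat -> expect) :
  (forall n, nonneg (g n)) -> (forall n, leF (g n) (g n.+1)) ->
  (forall n, nonneg (F n)) -> (forall n, leF (F n) (F n.+1)) ->
  Phw (esup g) (esup F) = esup (fun n => Phw (g n) (F n)).
Proof.
move=> g0 gc F0 Fc; apply/funext => s; rewrite /Phw Cec // !esupE -!supI -supD //.
- by move=> n; apply: lee_wpmul2l; rewrite ?iverson_ge0 //; apply: Cem.
- by move=> n; apply: lee_wpmul2l; rewrite ?iverson_ge0 //; apply: gc.
- by move=> n; apply: mule_ge0; rewrite ?iverson_ge0 //; apply: Ce0.
- by move=> n; apply: mule_ge0; rewrite ?iverson_ge0 //; apply: g0.
Qed.

Lemma Itw_ge0 g k : nonneg g -> nonneg (It (Phw g) k).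
Proof. by move=> g0; elim: k => [|k IH] s //=; apply: Phw_ge0. Qed.

Lemma Itw_mono g g' k : nonneg g -> leF g g' -> leF (It (Phw g) k) (It (Phw g') k).
Proof.
move=> g0 gg; elim: k => [|k IH] s //=.
apply: Phw_mono => //; exact: Itw_ge0.
Qed.

Lemma esup_ge0 (g : nat -> expect) : (forall n, nonneg (g n)) -> nonneg (esup g).
Proof. by move=> g0 s; rewrite esupE; apply: sup_ge0 => n; apply: g0. Qed.

Lemma Itw_sup (g : nat -> expect) k :
  (forall n, nonneg (g n)) -> (forall n, leF (g n) (g n.+1)) ->
  It (Phw (esup g)) k = esup (fun n => It (Phw (g n)) k).
Proof.
move=> g0 gc; elim: k => [|k IH].
  by apply/funext => s; rewrite esupE /= supC.
rewrite /= -/(It _ k) IH Phw_cont //.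
- by move=> n; apply: Itw_ge0.
- by move=> n; apply: Itw_mono.
Qed.

Lemma while_cont (g : nat -> expect) :
  (forall n, nonneg (g n)) -> (forall n, leF (g n) (g n.+1)) ->
  lfp (Phw (esup g)) = esup (fun n => lfp (Phw (g n))).
Proof.
move=> g0 gc.
have E : forall h, nonneg h -> lfp (Phw h) = esup (It (Phw h)).
  move=> h h0; apply: lfp_iter.
  - by move=> F F0; apply: Phw_ge0.
  - by move=> F G F0 FG; apply: Phw_mono.
  - move=> F F0 Fc; rewrite -{1}(_ : esup (fun _ => h) = h); last first.
      by apply/funext => s; rewrite esupE supC.
    by rewrite Phw_cont // => n s; apply: lexx.
rewrite E; last exact: esup_ge0.
rewrite (_ : (fun n => lfp (Phw (g n))) = fun n => esup (It (Phw (g n)))); last first.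
  by apply/funext => n; rewrite E.
apply/funext => s; rewrite !esupE.
under eq_fun do rewrite Itw_sup // esupE.
under [in RHS]eq_fun do rewrite esupE.
exact: sup_swap.
Qed.
End While.
End Lfp.

Section Main.
Variables (R : realType) (Var : finType) (c : bool).
Local Open Scope ereal_scope.
Local Notation expect := (expect R Var).

Lemma et_cont (C : cmd R Var) : forall f : nat -> expect,
  (forall n, nonneg (f n)) -> (forall n, leF (f n) (f n.+1)) ->
  et c C (esup f) = esup (fun n => et c C (f n)).
Proof.
elim: C.
- by [].
- move=> r hr f f0 fc; apply/funext => s; rewrite /= !esupE supD ?supC //.
  + by move=> n; apply: fc.
  + by move=> n; apply: mule_ge0; rewrite ?iverson_ge0 // lee_fin ler0q.
  + by move=> n; apply: f0.
- by move=> f _ _; apply/funext => s; rewrite esupE /= supC.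
- move=> x d f f0 fc; apply/funext => s; rewrite /= esupE.
  rewrite -(@esum_sup _ _ (fun n i => (d s i)%:E * f n (upd s x i))).
  + by apply: eq_esum => i _; rewrite esupE supZ // dmass_ge0.
  + by move=> n i; apply: mule_ge0; [rewrite lee_fin; exact: dmass_ge0 | exact: f0].
  + by move=> i n; apply: lee_wpmul2l; [rewrite lee_fin dmass_ge0 | apply: fc].
- move=> psi phi C1 IH1 D1 IH2 f f0 fc; apply/funext => s.
  rewrite /= IH1 // IH2 // !esupE -!supI -supD //.
  + by move=> n; apply: lee_wpmul2l; rewrite ?iverson_ge0 //; apply: et_mono.
  + by move=> n; apply: lee_wpmul2l; rewrite ?iverson_ge0 //; apply: et_mono.
  + by move=> n; apply: mule_ge0; rewrite ?iverson_ge0 //; apply: et_ge0.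
  + by move=> n; apply: mule_ge0; rewrite ?iverson_ge0 //; apply: et_ge0.
- move=> psi phi C1 IH f f0 fc.
  apply: (@while_cont R Var (et c C1) (fun s => psi s && phi s) (fun s => psi s && ~~ phi s)) => //.
  + by move=> F F0; apply: et_ge0.
  + by move=> F G F0 FG; apply: et_mono.
- move=> C1 IH1 D1 IH2 f f0 fc; apply/funext => s.
  by rewrite /= IH1 // IH2 // !esupE supmax.
- move=> C1 IH1 p hp D1 IH2 f f0 fc; have /andP[p0 p1] := hp; apply/funext => s.
  rewrite /= IH1 // IH2 // !esupE -supZ // -[in X in _ + X = _]supZ ?subr_ge0 // -supD //.
  + by move=> n; apply: lee_wpmul2l; rewrite ?lee_fin //; apply: et_mono.
  + by move=> n; apply: lee_wpmul2l; rewrite ?lee_fin ?subr_ge0 //; apply: et_mono.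
  + by move=> n; apply: mule_ge0; rewrite ?lee_fin //; apply: et_ge0.
  + by move=> n; apply: mule_ge0; rewrite ?lee_fin ?subr_ge0 //; apply: et_ge0.
- move=> C1 IH1 D1 IH2 f f0 fc; apply/funext => s.
  rewrite /= IH2 // IH1 //.
  + by move=> n; apply: et_ge0.
  + by move=> n; apply: et_mono => //; apply: et_ge0.
Qed.
End Main.

Theorem mainTheorem1 (R : realType) (Var : finType) (C : cmd R Var) (c : bool)
  (f : nat -> expect R Var)
  (f_ge0 : forall n s, (0 <= f n s)%E)
  (f_chain : forall n s, (f n s <= f n.+1 s)%E) :
  et c C (esup f) = esup (fun n => et c C (f n)).
Proof. by apply: et_cont. Qed.
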